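(* Let $(\mathcal A,d)$ be a DGA, let $a,b_1,\dots,b_n\in\mathcal A$ be closed with $|a|$ even and $a\wedge b_i$ exact, and let $\xi_i$ satisfy $d\xi_i=a\wedge b_i$. Let $c=\sum_{i=1}^n \overline{\xi_1}\wedge\cdots\wedge\overline{\xi_{i-1}}\wedge b_i\wedge\xi_{i+1}\wedge\cdots\wedge\xi_n$. Let $\sigma$ be the transposition of $\{1,\dots,n\}$ exchanging $j$ and $j+1$ for some $j$, and let $$c_\sigma=\sum_{i=1}^n \overline{\xi_{\sigma(1)}}\wedge\cdots\wedge\overline{\xi_{\sigma(i-1)}}\wedge b_{\sigma(i)}\wedge\xi_{\sigma(i+1)}\wedge\cdots\wedge\xi_{\sigma(n)}.$$ Then $c=(-1)^{(|b_j|+1)(|b_{j+1}|+1)}c_\sigma$.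
   Context: A DGA is a graded-commutative differential graded algebra over $\mathbb R$; $|x|$ denotes degree and $\overline{x}=(-1)^{|x|}x$. *)

(* Defs.v *)
From HB Require Import structures.
From mathcomp Require Import all_boot all_order all_algebra all_fingroup.
From mathcomp Require Export reals.
Set Implicit Arguments. Unset Strict Implicit. Unset Printing Implicit Defensive.
Import Order.TTheory GRing.Theory Num.Theory.
Local Open Scope ring_scope.

Definition sgn (R : ringType) (p : int) : R := (-1) ^+ `|p|%N.

Definition bar (R : ringType) (A : lmodType R) (k : int) (x : A) : A := sgn R k *: x.

(* A (Z-)graded-commutative differential graded algebra over R:
   A is an associative unital R-algebra, H k is the homogeneous component of
   degree k, A = (+)_k H k (direct sum), H p * H q <= H (p+q), graded
   commutativity, d linear of degree +1, d o d = 0, graded Leibniz rule. *)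
Record isDGA (R : comNzRingType) (A : algType R) (H : int -> {pred A}) (d : A -> A)
  : Prop := {
  dga_H0 : forall k, 0 \in H k;
  dga_Hlin : forall k (r : R) x y, x \in H k -> y \in H k -> r *: x + y \in H k;
  dga_Hspan : forall x : A, exists s : seq (int * A),
      all (fun p => p.2 \in H p.1) s /\ x = \sum_(p <- s) p.2;
  dga_Hdirect : forall (s : seq int) (f : int -> A), uniq s ->
      (forall k, f k \in H k) -> \sum_(k <- s) f k = 0 ->
      forall k, k \in s -> f k = 0;
  dga_H1 : (1 : A) \in H 0;
  dga_Hmul : forall p q x y, x \in H p -> y \in H q -> x * y \in H (p + q);
  dga_comm : forall p q x y, x \in H p -> y \in H q ->
      x * y = sgn R (p * q) *: (y * x);
  dga_dlin : forall (r : R) x y, d (r *: x + y) = r *: d x + d y;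
  dga_ddeg : forall k x, x \in H k -> d x \in H (k + 1);
  dga_dd : forall x, d (d x) = 0;
  dga_leibniz : forall p x y, x \in H p ->
      d (x * y) = d x * y + sgn R p *: (x * d y)
}.

(* Main.v *)
Require Import Defs.
From HB Require Import structures.
From mathcomp Require Import all_boot all_order all_algebra all_fingroup.
From mathcomp Require Import reals.
From mathcomp Require Import zify ring.
Import Order.TTheory GRing.Theory Num.Theory.
Local Open Scope ring_scope.

Lemma parD (x y : int) : odd (absz (x + y)) = odd (absz x) (+) odd (absz y).
Proof.
rewrite -oddD. have h : (absz (x + y)%R %% 2 = (absz x + absz y) %% 2)%N by lia.
by rewrite !modn2 in h; move: h; do 2 case: odd.
Qed.
Lemma parM (x y : int) : odd (absz (x * y)) = odd (absz x) && odd (absz y).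
Proof. by rewrite abszM oddM. Qed.
Lemma parN1 : odd (absz (-1 : int)) = true. Proof. by []. Qed.
Lemma par1 : odd (absz (1 : int)) = true. Proof. by []. Qed.

Lemma sgnE (R : ringType) z : sgn R z = (-1) ^+ odd (absz z).
Proof. by rewrite /sgn signr_odd. Qed.
Lemma sgnD (R : ringType) x y : sgn R (x + y) = sgn R x * sgn R y.
Proof. by rewrite !sgnE parD signr_addb. Qed.
Lemma sgn_par (R : ringType) x y : odd (absz x) = odd (absz y) -> sgn R x = sgn R y.
Proof. by rewrite !sgnE => ->. Qed.


Definition term {A : ringType} (n : nat) (X B Y : nat -> A) (i : nat) : A :=
  (\prod_(0 <= k < i) X k) * B i * \prod_(i.+1 <= k < n) Y k.

Definition snat (j k : nat) : nat := if k == j then j.+1 else if k == j.+1 then j else k.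

Lemma snat_id j k : k != j -> k != j.+1 -> snat j k = k.
Proof. by rewrite /snat => /negbTE -> /negbTE ->. Qed.
Lemma snat_j j : snat j j = j.+1. Proof. by rewrite /snat eqxx. Qed.
Lemma snat_j1 j : snat j j.+1 = j. Proof. by rewrite /snat eqxx; case: ifP => /eqP; lia. Qed.

Section Gen.
Variables (R : comNzRingType) (A : algType R) (X B Y : nat -> A) (e : R) (n j : nat).
Hypothesis hj : (j.+1 < n)%N.
Let Xs := X \o snat j.
Let Bs := B \o snat j.
Let Ys := Y \o snat j.

Lemma eq_out (F : nat -> A) (m p : nat) : (p <= j \/ j.+1 < m)%N ->
  \prod_(m <= k < p) (F \o snat j) k = \prod_(m <= k < p) F k.
Proof.
move=> hmp; apply: eq_big_nat => k /andP[h1 h2] /=; rewrite snat_id //.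
  by case: hmp => h; apply/eqP; lia.
by case: hmp => h; apply/eqP; lia.
Qed.

Lemma split_mid (F : nat -> A) (m p : nat) : (m <= j)%N -> (j.+2 <= p)%N ->
  \prod_(m <= k < p) F k = (\prod_(m <= k < j) F k) * (F j * F j.+1) * \prod_(j.+2 <= k < p) F k.
Proof.
move=> h1 h2.
rewrite (big_cat_nat (n:=j)); try lia.
rewrite (big_cat_nat (n:=j.+2) (m:=j)); try lia.
by rewrite (big_ltn (m:=j)) // big_nat1; apply: mulrA.
Qed.

Lemma term_lt i : (i < j)%N -> Y j * Y j.+1 = e *: (Y j.+1 * Y j) ->
  term n X B Y i = e *: term n Xs Bs Ys i.
Proof.
move=> hi h; rewrite /term (split_mid Y); try lia.
rewrite (split_mid Ys); try lia.
rewrite /Xs /Bs /Ys !eq_out; try by (left; lia) || (right; lia).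
rewrite /= snat_j snat_j1 snat_id; try by apply/eqP; lia.
by rewrite h -scalerAr -scalerAl -!scalerAr.
Qed.

Lemma term_gt i : (j.+1 < i)%N -> X j * X j.+1 = e *: (X j.+1 * X j) ->
  term n X B Y i = e *: term n Xs Bs Ys i.
Proof.
move=> hi h; rewrite /term (split_mid X 0 i) //.
rewrite (split_mid Xs 0 i) //.
rewrite /Xs /Bs /Ys !eq_out; try by (left; lia) || (right; lia).
rewrite /= snat_j snat_j1 snat_id; try by apply/eqP; lia.
by rewrite h -scalerAr -scalerAl -!scalerAl.
Qed.

Lemma term_j : B j * Y j.+1 = e *: (X j.+1 * B j) ->
  term n X B Y j = e *: term n Xs Bs Ys j.+1.
Proof.
move=> h; rewrite /term big_nat_recr //= (big_ltn (m:=j.+1)) //.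
rewrite /Xs /Bs /Ys !eq_out; try by (left; lia) || (right; lia).
rewrite /= snat_j snat_j1 mulrA -(mulrA _ (B j)) h.
by rewrite -scalerAr -scalerAl !mulrA.
Qed.

Lemma term_j1 : X j * B j.+1 = e *: (B j.+1 * Y j) ->
  term n X B Y j.+1 = e *: term n Xs Bs Ys j.
Proof.
move=> h; rewrite /term big_nat_recr //= (big_ltn (m:=j.+1) (F := Ys)) //.
rewrite /Xs /Bs /Ys !eq_out; try by (left; lia) || (right; lia).
rewrite /= snat_j snat_j1 -(mulrA _ (X j)) h.
by rewrite -scalerAr -scalerAl !mulrA.
Qed.

Lemma sum_swap :
  Y j * Y j.+1 = e *: (Y j.+1 * Y j) ->
  X j * X j.+1 = e *: (X j.+1 * X j) ->
  B j * Y j.+1 = e *: (X j.+1 * B j) ->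
  X j * B j.+1 = e *: (B j.+1 * Y j) ->
  \sum_(0 <= i < n) term n X B Y i = e *: \sum_(0 <= i < n) term n Xs Bs Ys i.
Proof.
move=> h1 h2 h3 h4.
have S : forall F : nat -> A, \sum_(0 <= i < n) F i =
   \sum_(0 <= i < j) F i + (F j + F j.+1) + \sum_(j.+2 <= i < n) F i.
  move=> F; rewrite (big_cat_nat (n:=j)); try lia.
  rewrite (big_cat_nat (n:=j.+2) (m:=j)); try lia.
  by rewrite (big_ltn (m:=j)) // big_nat1; apply: addrA.
rewrite !S !scalerDr !scaler_sumr.
congr (_ + _ + _).
- by apply: eq_big_nat => i /andP[_ hi]; apply: term_lt.
- by rewrite term_j // term_j1 // addrC.
- by apply: eq_big_nat => i /andP[hi _]; apply: term_gt.
Qed.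
End Gen.

Lemma term_ext (A : ringType) n (X B Y X' B' Y' : nat -> A) i : (i < n)%N ->
  (forall k, (k < n)%N -> X k = X' k) -> (forall k, (k < n)%N -> B k = B' k) ->
  (forall k, (k < n)%N -> Y k = Y' k) -> term n X B Y i = term n X' B' Y' i.
Proof.
move=> hi hX hB hY; rewrite /term hB //; congr (_ * _ * _).
  by apply: eq_big_nat => k /andP[_ hk]; apply: hX; lia.
by apply: eq_big_nat => k /andP[_ hk]; apply: hY.
Qed.

Lemma conv (A : ringType) n (j0 : 'I_n) (Xo Bo Yo : 'I_n -> A) :
  \sum_(i < n) ((\prod_(k < n | (k < i)%N) Xo k) * Bo i * \prod_(k < n | (i < k)%N) Yo k)
  = \sum_(0 <= i < n) term n (Xo \o insubd j0) (Bo \o insubd j0) (Yo \o insubd j0) i.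
Proof.
rewrite big_mkord; apply: eq_bigr => i _; rewrite /term /= valKd.
congr (_ * _ * _).
  rewrite (@big_nat_widen _ _ _ 0 i n) ?(ltnW (ltn_ord i)) // big_mkord.
  by apply: eq_big => [k|k _] //=; rewrite valKd.
rewrite (@big_nat_widenl _ _ _ i.+1 0 n) // big_mkord.
by apply: eq_big => [k|k _] //=; rewrite valKd.
Qed.

Theorem lemma2p4 (R : realType) (A : algType R) (H : int -> {pred A})
  (d : A -> A) (HD : isDGA H d)
  (n : nat) (a : A) (da : int) (b xi : 'I_n -> A) (db : 'I_n -> int)
  (Ha : a \in H da) (Hda_even : ~~ odd `|da|%N) (Hda_closed : d a = 0)
  (Hb : forall i, b i \in H (db i)) (Hb_closed : forall i, d (b i) = 0)
  (Hxi : forall i, xi i \in H (da + db i - 1))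
  (Hdxi : forall i, d (xi i) = a * b i)
  (j : nat) (hj : (j.+1 < n)%N) :
  let j0 : 'I_n := Ordinal (ltnW hj) in
  let j1 : 'I_n := Ordinal hj in
  let s : {perm 'I_n} := tperm j0 j1 in
  let c := \sum_(i < n)
      ((\prod_(k < n | (k < i)%N) bar (da + db k - 1) (xi k)) * b i *
        \prod_(k < n | (i < k)%N) xi k) in
  let c_s := \sum_(i < n)
      ((\prod_(k < n | (k < i)%N) bar (da + db (s k) - 1) (xi (s k))) * b (s i) *
        \prod_(k < n | (i < k)%N) xi (s k)) in
  c = sgn R ((db j0 + 1) * (db j1 + 1)) *: c_s.
Proof.
move=> j0 j1 s c c_s.
pose Y k := xi (insubd j0 k).
pose Bn k := b (insubd j0 k).
pose X k := bar (da + db (insubd j0 k) - 1) (xi (insubd j0 k)).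
have Ej : insubd j0 j = j0 by apply: val_inj; rewrite val_insubd /= ltnW.
have Ej1 : insubd j0 j.+1 = j1 by apply: val_inj; rewrite val_insubd /= hj.
have Es : forall k, (k < n)%N -> insubd j0 (snat j k) = s (insubd j0 k).
  move=> k hk; apply: val_inj; rewrite val_insubd.
  have hk' : (snat j k < n)%N by rewrite /snat; case: (@eqP _ k j) => _; [lia|case: (@eqP _ k j.+1) => _; lia].
  rewrite hk'; have hv : val (insubd j0 k) = k by rewrite val_insubd hk.
  rewrite -{1}hv /s; case: tpermP => [->|->|h1 h2].
  - by rewrite snat_j.
  - by rewrite snat_j1.
  - rewrite snat_id //; apply/eqP => e0.
      by apply: h1; apply: val_inj.
    by apply: h2; apply: val_inj.
have Hc : c = \sum_(0 <= i < n) term n X Bn Y i by rewrite /c (@conv _ _ j0).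
have Hcs : c_s = \sum_(0 <= i < n) term n (X \o snat j) (Bn \o snat j) (Y \o snat j) i.
  rewrite /c_s (@conv _ _ j0); apply: eq_big_nat => i /andP[_ hi].
  by apply: term_ext => // k hk; rewrite /= /X /Bn /Y Es.
rewrite Hc Hcs; set e := sgn R _.
have Hev : odd (absz da) = false by apply/negbTE.
have h1 : xi j0 * xi j1 = e *: (xi j1 * xi j0).
  rewrite (dga_comm HD (Hxi j0) (Hxi j1)); congr (_ *: _); apply: sgn_par.
  by rewrite /e !parM !parD Hev /=; do 2 case: odd.
apply: sum_swap => //; rewrite /X /Bn /Y Ej Ej1 /bar //.
- rewrite -!scalerAl -!scalerAr !scalerA h1 scalerA; congr (_ *: _).
  by ring.
- rewrite (dga_comm HD (Hb j0) (Hxi j1)) -scalerAl scalerA; congr (_ *: _).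
  rewrite -sgnD; apply: sgn_par.
  by rewrite /e !parM !parD ?(parM (db j0 + 1)) ?parD Hev /=; do 2 case: odd.
- rewrite -scalerAl (dga_comm HD (Hxi j0) (Hb j1)) scalerA; congr (_ *: _).
  rewrite -sgnD; apply: sgn_par.
  by rewrite /e !parM !parD ?(parM (db j0 + 1)) ?(parM (da + db j0 - 1)) ?parD Hev /=; do 2 case: odd.
Qed.
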